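(* For every $n\ge 1$ and every $A$ as in the context there exists $\mathrm{Single}(n,A)\in A\cup\{\infty\}$ such that, for every positive integer $x$, the position $P_x$ of $\mathrm{AGG}(n,A)$ consisting of one tile of value $x$ and $n-1$ empty cells is reachable if and only if $x\in A$ and $x\le \mathrm{Single}(n,A)$. In particular, if $\mathrm{Single}(n,A)$ is finite it is the largest value of a single tile achievable in $\mathrm{AGG}(n,A)$, and if it is $\infty$ then every value in $A$ is achievable as a single tile.
   Context: Let $A$ be a set of positive integers with $1\in A$ (the allowed tile values). For an integer $n\ge 0$, the abstract generalized 2048 game $\mathrm{AGG}(n,A)$ is played on $n$ indistinguishable cells. A position assigns to each cell either nothing (the cell is empty) or a tile carrying a value in $A$. The initial position has all cells empty. A step, which can be performed from any position having at least one empty cell, consists of: (i) placing a new tile of value $1$ into a chosen empty cell; then (ii) optionally choosing any collection of pairwise disjoint sets of nonempty cells such that the sum of the tile values in each chosen set belongs to $A$, and merging each chosen set into a single tile, whose value is that sum, placed in one cell of the set, the other cells of the set becoming empty. The game ends when, after a step, all cells are nonempty (no further step is then possible). A position is reachable if it can be obtained from the initial position by a finite sequence of steps. *)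

(* Defs.v *)
From mathcomp Require Import all_boot.
From Stdlib Require Import Relations.
Set Implicit Arguments. Unset Strict Implicit. Unset Printing Implicit Defensive.

(* A position of AGG(n,A): the cells are indistinguishable, so a position is
   the multiset of the values of its (nonempty) tiles, represented as a
   [seq nat] considered up to permutation; the remaining n - size p cells
   are empty. *)
Definition position := seq nat.

(* One step from p to q in AGG(n,A): p has an empty cell (size p < n); a tile
   of value 1 is placed, giving the tiles [1 :: p]; then the tiles are
   partitioned into nonempty groups [gs]; each group of size >= 2 is a chosen
   set that is merged (its sum must lie in A), singleton groups are the
   untouched tiles (merging a singleton set changes nothing). *)
Definition agg_step (n : nat) (A : nat -> Prop) (p q : position) : Prop :=
  size p < n /\
  exists gs : seq (seq nat),
    [/\ perm_eq (flatten gs) (1 :: p),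
        (forall g, g \in gs -> g != [::]),
        (forall g, g \in gs -> size g = 1 \/ A (sumn g)) &
        perm_eq q (map sumn gs)].

Definition agg_reachable (n : nat) (A : nat -> Prop) (p : position) : Prop :=
  clos_refl_trans position (agg_step n A) [::] p.

(* Single(n,A) \in A \cup {oo}: [None] encodes oo. *)
Definition le_ext (x : nat) (s : option nat) : Prop :=
  match s with Some m => x <= m | None => True end.

(* Main.v *)
Require Import Defs.
From mathcomp Require Import all_boot.
From Stdlib Require Import Relations Classical.

Set Implicit Arguments.
Section S.
Variables (n : nat) (A : nat -> Prop).

Inductive rN : nat -> position -> Prop :=
| r0 : rN 0 [::]
| rS k p q : rN k p -> agg_step n A p q -> rN k.+1 q.

Lemma step_sum p q : agg_step n A p q -> sumn q = (sumn p).+1.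
Proof.
case=> _ [gs [h1 _ _ h4]].
rewrite (perm_sumn h4) -sumn_flatten (perm_sumn h1) /=. by rewrite add1n.
Qed.

Lemma rN_sum k p : rN k p -> sumn p = k.
Proof. elim=> // k0 p0 q _ IH hs; by rewrite (step_sum hs) IH. Qed.

Lemma reach_rN p : agg_reachable n A p -> exists k, rN k p.
Proof.
move=> h0; have h := clos_rt_rtn1 _ _ _ _ h0; elim: h; first by exists 0; constructor.
move=> y z hs _ [k hk]. exists k.+1; exact: rS hk hs.
Qed.

Lemma rN_reach k p : rN k p -> agg_reachable n A p.
Proof.
elim; first by apply: rt_refl.
move=> k0 p0 q _ IH hs. apply: rt_trans IH _. exact: rt_step.
Qed.

Lemma rN_prefix k p : rN k p -> forall j, j < k -> exists q, rN j q /\ size q < n.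
Proof.
elim=> // k0 p0 q hp IH hs j.
rewrite ltnS leq_eqVlt => /orP [/eqP ->|hj]; last exact: IH.
exists p0; split=> //; by case: hs.
Qed.

Lemma downward x y : agg_reachable n A [:: x] -> A y -> 0 < y -> y <= x ->
  agg_reachable n A [:: y].
Proof.
move/reach_rN=> [k hk] hAy hy hyx.
have hkx : k = x by rewrite -(rN_sum hk) /= addn0.
subst k.
have [q [hq hsz]] := @rN_prefix _ _ hk y.-1 (ltac:(by case: (y) hy hyx)).
apply: rN_reach (rS hq _).
split=> //. exists [:: 1 :: q]; split.
- by rewrite /= cats0.
- by move=> g; rewrite inE => /eqP ->.
- move=> g; rewrite inE => /eqP ->; right.
  by rewrite /= (rN_sum hq) add1n prednK.
- by rewrite /= (rN_sum hq) add1n prednK.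
Qed.

Lemma reach_A x : agg_reachable n A [:: x] -> A 1 -> A x.
Proof.
move/reach_rN=> [k hk] h1. inversion hk; subst.
case: H0 => _ [gs [h1' h2 h3 h4]].
case: gs h1' h2 h3 h4 => [|g [|g' gs]] h1' h2 h3 h4.
- by have := perm_size h4.
- have := perm_mem h4 x; rewrite !inE eqxx => /esym/eqP hx.
  move: h1'; rewrite /= cats0 => hg.
  have hs : sumn g = sumn (1 :: p) := perm_sumn hg.
  case: (h3 g (mem_head _ _)) => [hsz|]; last by rewrite hx.
  have := perm_size hg; rewrite hsz /=; case: p hs {hk H hg} => //= hs _.
  by rewrite hx hs.
- by have := perm_size h4.
Qed.
End S.
Unset Implicit Arguments.

Theorem mainTheorem4 (n : nat) (A : nat -> Prop)
  (hn : 1 <= n) (hA1 : A 1) (hApos : forall a, A a -> 0 < a) :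
  exists S : option nat,
    (forall s, S = Some s -> A s) /\
    (forall x, 0 < x -> (agg_reachable n A [:: x] <-> A x /\ le_ext x S)).
Proof.
pose R x := 0 < x /\ agg_reachable n A [:: x].
have R1 : R 1.
  split=> //; apply: rt_step; split=> //; exists [:: [:: 1]]; split=> //.
  - by move=> g; rewrite inE => /eqP ->.
  - by move=> g; rewrite inE => /eqP ->; left.
have hmax : forall m, (exists x, R x) -> (forall x, R x -> x <= m) ->
    exists s, R s /\ forall x, R x -> x <= s.
  elim=> [|m IH] hex hb.
  - case: hex => x hx; have := hb x hx; case: hx; by case: x.
  - case: (classic (R m.+1)) => hRm; first by exists m.+1.
    apply: IH => // x hx. have := hb x hx; rewrite leq_eqVlt => /orP [/eqP e|//].
    by subst x.
case: (classic (exists m, forall x, R x -> x <= m)) => [[m hm]|hnb].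
- have [s [[hs0 hs] hsm]] := hmax m (ex_intro _ 1 R1) hm.
  exists (Some s); split.
  + by move=> s' [<-]; exact: reach_A hs hA1.
  + move=> x hx; split.
    * move=> h; split; first exact: reach_A h hA1.
      exact: hsm.
    * case=> hAx /= hxs; exact: downward hs hAx hx hxs.
- exists None; split=> // x hx; split.
  + move=> h; split=> //; exact: reach_A h hA1.
  + case=> hAx _.
    have : ~ forall y, R y -> y <= x by move=> h; apply: hnb; exists x.
    move/not_all_ex_not=> [y hy].
    case: (classic (R y)) => hRy; last by exfalso; apply: hy.
    case: (leqP y x) => hyx; first by exfalso; apply: hy.
    case: hRy => _ hy'; exact: downward hy' hAx hx (ltnW hyx).
Qed.
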